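(* Let $A_1,A_2\subseteq A$ be disjoint, and let $M$ and $N$ be tree-like models with roots $s$ and $t$ respectively. If $M,s\succeq_{(A_1,A_2)}N,t$, then there exist a tree-like model $N'$ with root $t'$ and a relation $\mathcal Z\subseteq S^M\times S^{N'}$ such that (1) $N,t\,\underline{\leftrightarrow}\,N',t'$; (2) $\mathcal Z$ is an $(A_1,A_2)$-refinement between $M$ and $N'$ with $s\mathcal Zt'$; and (3) $\mathcal Z$ is injective: for all $v\in S^{N'}$ and $w_1,w_2\in S^M$, if $w_1\mathcal Zv$ and $w_2\mathcal Zv$ then $w_1=w_2$.
   Context: Fix a finite set $A$ of actions and a countably infinite set $Atom$ of propositional letters. A model is $M=\langle S^M,R^M,V^M\rangle$ with $S^M\neq\emptyset$ a set of states, $R^M_b\subseteq S^M\times S^M$ for each $b\in A$, and $V^M:Atom\to 2^{S^M}$. $R^+_M$ denotes the transitive closure of $\bigcup_{b\in A}R^M_b$. Refinements: given $P\subseteq Atom$ and disjoint $A_1,A_2\subseteq A$, a relation $\mathcal Z\subseteq S^M\times S^{M'}$ is a $P$-restricted $(A_1,A_2)$-refinement between $M$ and $M'$ if for every pair $u\mathcal Z u'$: (atoms) $u\in V^M(r)$ iff $u'\in V^{M'}(r)$ for all $r\in Atom\setminus P$; (forth) for every $a\in A\setminus A_2$ and every $v$ with $uR^M_a v$ there is $v'$ with $u'R^{M'}_a v'$ and $v\mathcal Z v'$; (back) for every $a\in A\setminus A_1$ and every $v'$ with $u'R^{M'}_a v'$ there is $v$ with $uR^M_a v$ and $v\mathcal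 Z v'$. Write $M,u\succeq^P_{(A_1,A_2)}M',u'$ if such a $\mathcal Z$ exists with $u\mathcal Z u'$; the superscript is omitted when $P=\emptyset$. A bisimulation is an $\emptyset$-restricted $(\emptyset,\emptyset)$-refinement; $M,s\,\underline{\leftrightarrow}\,N,t$ means one exists linking $s$ and $t$. A model $M$ is tree-like if: (i) there is a unique state $s$ (the root) such that $sR^+_Mt$ for all $t\in S^M\setminus\{s\}$; (ii) for each $t\in S^M\setminus\{s\}$ there is a unique $t'\in S^M$ with $t'R^M_at$ for some $a\in A$; (iii) $R^M_a\cap R^M_b=\emptyset$ for all distinct $a,b\in A$; (iv) $\langle t,t\rangle\notin R^+_M$ for all $t\in S^M$. *)

(* Defs.v *)
From mathcomp Require Import all_boot.
From Stdlib Require Import Relations.Relation_Operators.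
Unset Strict Implicit. Unset Printing Implicit Defensive.

Definition Atom := nat.

Record model (A : finType) := Model {
  St : Type;
  St_ne : inhabited St;
  Rel : A -> St -> St -> Prop;
  Val : Atom -> St -> Prop }.
Arguments St {A}. Arguments Rel {A}. Arguments Val {A}. Arguments St_ne {A}.

Definition step (A : finType) (M : model A) (u v : St M) : Prop :=
  exists b : A, Rel M b u v.
Arguments step {A}.

Definition Rplus (A : finType) (M : model A) : St M -> St M -> Prop :=
  clos_trans (St M) (step M).
Arguments Rplus {A}.

Definition is_root (A : finType) (M : model A) (s : St M) : Prop :=
  forall t, t <> s -> Rplus M s t.
Arguments is_root {A}.

Definition tree_like (A : finType) (M : model A) : Prop :=
  (exists! s, is_root M s) /\
  (forall s t, is_root M s -> t <> s ->
     exists! t', exists a : A, Rel M a t' t) /\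
  (forall a b : A, a <> b -> forall u v, ~ (Rel M a u v /\ Rel M b u v)) /\
  (forall t, ~ Rplus M t t).
Arguments tree_like {A}.

Definition is_refinement (A : finType) (P : Atom -> Prop) (A1 A2 : {set A})
    (M M' : model A) (Z : St M -> St M' -> Prop) : Prop :=
  forall u u', Z u u' ->
    (forall r, ~ P r -> (Val M r u <-> Val M' r u')) /\
    (forall a, a \notin A2 -> forall v, Rel M a u v ->
        exists v', Rel M' a u' v' /\ Z v v') /\
    (forall a, a \notin A1 -> forall v', Rel M' a u' v' ->
        exists v, Rel M a u v /\ Z v v').
Arguments is_refinement {A}.

Definition refines (A : finType) (P : Atom -> Prop) (A1 A2 : {set A})
    (M : model A) (u : St M) (M' : model A) (u' : St M') : Prop :=
  exists Z, is_refinement P A1 A2 M M' Z /\ Z u u'.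
Arguments refines {A}.

Definition no_atoms : Atom -> Prop := fun _ => False.

Definition bisim {A : finType} (M : model A) (s : St M) (N : model A) (t : St N)
  : Prop := refines no_atoms set0 set0 M s N t.

(* Main.v *)
Require Import Defs.
From mathcomp Require Import all_boot.
From Stdlib Require Import Relations.Relation_Operators ProofIrrelevance.

Section Constr.
End Constr.

Definition lastN {A : finType} {M N : model A} (t : St N)
  (p : list (A * St N * option (St M))) : St N :=
  match p with [::] => t | (_, v, _) :: _ => v end.

Definition tagM {A : finType} {M N : model A} (s : St M)
  (p : list (A * St N * option (St M))) : option (St M) :=
  match p with [::] => Some s | (_, _, o) :: _ => o end.

Fixpoint valid {A : finType} (A1 : {set A}) (M N : model A) (s : St M) (t : St N)
  (Z0 : St M -> St N -> Prop) (p : list (A * St N * option (St M))) : Prop :=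
  match p with
  | [::] => True
  | (a, v, o) :: q => valid A1 M N s t Z0 q /\ Rel N a (lastN t q) v /\
      match o with
      | Some w' => exists w, tagM s q = Some w /\ Rel M a w w' /\ Z0 w' v
      | None => tagM s q = None \/ a \in A1
      end
  end.

Definition NN {A : finType} (A1 : {set A}) (M N : model A) (s : St M) (t : St N)
  (Z0 : St M -> St N -> Prop) : model A :=
  @Model A {p | valid A1 M N s t Z0 p}
    (inhabits (exist _ [::] I))
    (fun a p q => exists v o, sval q = (a, v, o) :: sval p)
    (fun r p => Val N r (lastN t (sval p))).

Lemma sig_eq' (T : Type) (P : T -> Prop) (p1 p2 : T) (h1 : P p1) (h2 : P p2) :
  p1 = p2 -> exist P p1 h1 = exist P p2 h2.
Proof. move=> E; subst; f_equal; apply proof_irrelevance. Qed.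

Theorem mainTheorem13 (A : finType) (A1 A2 : {set A})
  (M N : model A) (s : St M) (t : St N) :
  [disjoint A1 & A2] ->
  tree_like M -> is_root M s ->
  tree_like N -> is_root N t ->
  refines no_atoms A1 A2 M s N t ->
  exists (N' : model A) (t' : St N') (Z : St M -> St N' -> Prop),
    tree_like N' /\ is_root N' t' /\
    bisim N t N' t' /\
    is_refinement no_atoms A1 A2 M N' Z /\ Z s t' /\
    (forall (v : St N') (w1 w2 : St M), Z w1 v -> Z w2 v -> w1 = w2).
Proof.
move=> _ _ _ _ _ [Z0 [HZ0 Hst]].
pose N' := NN A1 M N s t Z0.
have inv : forall p, valid A1 M N s t Z0 p -> forall w, tagM s p = Some w -> Z0 w (lastN t p).
  case=> [|[[a v] o] q] /=.
    by move=> _ w [<-].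
  move=> [_ [_ H]] w E; subst o; by case: H => w0 [_ [_ H]].
pose root := (exist _ [::] I : St N').
have size_lt : forall x y : St N', Rplus N' x y -> size (sval x) < size (sval y).
  move=> x y; elim=> [x0 y0 [b [v [o E]]]|x0 y0 z0 _ H1 _ H2].
    by rewrite E.
  exact: ltn_trans H1 H2.
have reach : forall p (hp : valid A1 M N s t Z0 p),
    p = [::] \/ Rplus N' root (exist _ p hp).
  elim=> [|x q IH] hp; first by left.
  right; move: hp; case: x => [[a v] o] hp.
  have hq : valid A1 M N s t Z0 q by case: hp.
  have st : step N' (exist _ q hq) (exist _ ((a, v, o) :: q) hp).
    by exists a; exists v, o.
  case: (IH hq) => [Eq|Hr].
    subst q; have -> : root = exist _ [::] hq by apply: sig_eq'.
    exact: t_step.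
  exact: t_trans Hr (t_step _ _ _ _ st).
have root_is : is_root N' root.
  move=> [p hp] ne; case: (reach p hp) => // Eq; subst p.
  by exfalso; apply: ne; apply: sig_eq'.
have root_uniq : forall r : St N', is_root N' r -> r = root.
  move=> [p hp] Hr; case: p hp Hr => [|x q] hp Hr; first by apply: sig_eq'.
  have ne : root <> exist _ (x :: q) hp by move=> E; have := f_equal (@sval _ _) E.
  by have := size_lt _ _ (Hr _ ne).
exists N', root, (fun w p => tagM s (sval p) = Some w).
split.
  split; first by exists root; split => // r /root_uniq.
  split.
    move=> s0 [p hp] /root_uniq -> ne.
    move: hp ne; case: p => [|[[a v] o] q] hp ne.
      by exfalso; apply: ne; apply: sig_eq'.
    have hq : valid A1 M N s t Z0 q by case: (hp).
    exists (exist _ q hq); split; first by exists a, v, o.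
    move=> [q' hq'] [a' [v' [o' /= E]]]; apply: sig_eq'; by case: E.
  split.
    by move=> a b ab u v [[v1 [o1 E1]] [v2 [o2 E2]]]; apply: ab; rewrite E1 in E2; case: E2.
  by move=> x /size_lt; rewrite ltnn.
split => //.
split.
  exists (fun v (p : St N') => lastN t (sval p) = v); split => //.
  move=> v [p hp] /= E; split.
    by move=> r _; rewrite /= E.
  split.
    move=> a _ v' Hv.
    have HR : Rel N a (lastN t p) v' by rewrite E.
    case Et: (tagM s p) => [w|].
      case HA: (a \in A1).
        have hp' : valid A1 M N s t Z0 ((a, v', None) :: p) by split; [|split; [|right]].
        by exists (exist _ _ hp'); split => //; exists v', None.
      have Hz := inv p hp w Et.
      case: (HZ0 _ _ Hz) => _ [_ Hb].
      case: (Hb a (negbT HA) v' HR) => w' [Hw Hz'].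
      have hp' : valid A1 M N s t Z0 ((a, v', Some w') :: p)
        by split; [|split; [|exists w]].
      by exists (exist _ _ hp'); split => //; exists v', (Some w').
    have hp' : valid A1 M N s t Z0 ((a, v', None) :: p) by split; [|split; [|left]].
    by exists (exist _ _ hp'); split => //; exists v', None.
  move=> a _ [q hq] [v' [o /= Eq]]; subst q.
  case: hq => _ [HR _]; exists v'; split => //; by rewrite -E.
split.
  move=> w [p hp] /= Et; split.
    move=> r _; case: (HZ0 _ _ (inv p hp w Et)) => Hv _; exact: Hv.
  split.
    move=> a HA w' Hw.
    case: (HZ0 _ _ (inv p hp w Et)) => _ [Hf _].
    case: (Hf a HA w' Hw) => v' [HR Hz'].
    have hp' : valid A1 M N s t Z0 ((a, v', Some w') :: p)
      by split; [|split; [|exists w]].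
    by exists (exist _ _ hp'); split => //; exists v', (Some w').
  move=> a HA [q hq] [v' [o /= Eq]]; subst q.
  case: hq => _ [_ Ho]; case: o Ho => [w'|] Ho.
    case: Ho => w0 [E0 [Hw _]]; rewrite Et in E0; case: E0 => E1; subst w0.
    by exists w'.
  case: Ho => [E0|HA1]; first by rewrite Et in E0.
  by rewrite HA1 in HA.
split => //.
by move=> v w1 w2 -> [].
Qed.
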